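(* In the setting below, let $(u^h)_{h>0}$ be a uniformly bounded family of real-valued maps on $[0,T]\times\mathbb R$ with half-relaxed limits $\overline u,\underline u$, and let $u^{n,h}=(u^h(\tau^n,x_0),\dots,u^h(\tau^n,x_M))^\top$ (grid depending on $h$). Then for every $(t,x)\in[0,T]\times\mathbb R$, $\mathcal M\underline u(t,x)\le\liminf(\mathcal M_nu^{n,h})_i\le\limsup(\mathcal M_nu^{n,h})_i\le\mathcal M\overline u(t,x)$, where $\liminf$ and $\limsup$ are taken as $h\to0$ and $(\tau^n,x_i)\to(t,x)$ over grid points of the $h$-grid.
   Context: Fix $T>0$, a metric space $Y$, nonempty compact sets $Z(t,x)\subseteq Y$ for $(t,x)\in[0,T]\times\mathbb R$, and continuous $\Gamma(t,x,z)\in\mathbb R$, $K(t,x,z)\in\mathbb R$. Intervention operator: $\mathcal MV(t,x)=\sup_{z\in Z(t,x)}\{V(t,\Gamma(t,x,z))+K(t,x,z)\}$. For each $h>0$: a time step $\Delta\tau=T/N$ and space step $\Delta x$ with $\Delta\tau,\Delta x\le Ch$ ($C$ independent of $h$), $M$ even with $M\Delta x\to\infty$ as $h\to0$, $\tau^n=T-n\Delta\tau$ ($0\le n\le N$), $x_i=(i-M/2)\Delta x$ ($0\le i\le M$); finite nonempty sets $Z^h(t,x)\subseteq Z(t,x)$ with $Z^h\to Z$ locally uniformly in the Hausdorff metric as $h\to0$ and $(t,x)\mapsto Z^h(t,x)$ Hausdorff-continuous. Linear interpolation of $U\in\mathbb R^{M+1}$: $\operatorname{interp}(U,y)=\alpha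 U_{k+1}+(1-\alpha)U_k$ if $x_k\le y<x_{k+1}$, $\alpha=(y-x_k)/(x_{k+1}-x_k)$; $U_0$ if $y\le x_0$; $U_M$ if $y\ge x_M$. Discretized intervention operator: $(\mathcal M_nU)_i=\sup_{z\in Z^h(\tau^n,x_i)}\{\operatorname{interp}(U,\Gamma(\tau^n,x_i,z))+K(\tau^n,x_i,z)\}$. Half-relaxed limits: $\overline u(t,x)=\limsup_{h\to0,(s,y)\to(t,x)}u^h(s,y)$, $\underline u(t,x)=\liminf_{h\to0,(s,y)\to(t,x)}u^h(s,y)$. *)

(* Defs.v *)
From Stdlib Require Import Reals Lra Lia List Classical ClassicalEpsilon.
Open Scope R_scope.

(* ---------- suprema / infima of real sets (junk value 0 if no lub) ---------- *)
Definition Rsup (E : R -> Prop) : R :=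
  match excluded_middle_informative (bound E /\ exists x, E x) with
  | left H => proj1_sig (completeness E (proj1 H) (proj2 H))
  | right _ => 0
  end.

Definition Rinf (E : R -> Prop) : R := - Rsup (fun r => E (- r)).

(* limsup along a decreasing family of sets S delta (delta > 0) as delta -> 0:
   inf over those delta > 0 for which sup (S delta) is finite, of sup (S delta). *)
Definition limsup_at (S : R -> R -> Prop) : R :=
  Rinf (fun s => exists delta, delta > 0 /\ is_lub (S delta) s).

Definition liminf_at (S : R -> R -> Prop) : R :=
  - limsup_at (fun delta r => S delta (- r)).

Definition mopen (Y : Metric_Space) (U : Base Y -> Prop) : Prop :=
  forall y, U y -> exists eps, eps > 0 /\ forall w, dist Y y w < eps -> U w.

Definition mcompact (Y : Metric_Space) (A : Base Y -> Prop) : Prop :=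
  forall (I : Type) (U : I -> Base Y -> Prop),
    (forall i, mopen Y (U i)) ->
    (forall y, A y -> exists i, U i y) ->
    exists l : list I, forall y, A y -> exists i, In i l /\ U i y.

Definition finite_set {Y : Type} (A : Y -> Prop) : Prop :=
  exists l : list Y, forall y, A y <-> In y l.

Definition pt_set_dist (Y : Metric_Space) (a : Base Y) (B : Base Y -> Prop) : R :=
  Rinf (fun r => exists b, B b /\ r = dist Y a b).

Definition hausdorff_dist (Y : Metric_Space) (A B : Base Y -> Prop) : R :=
  Rmax (Rsup (fun r => exists a, A a /\ r = pt_set_dist Y a B))
       (Rsup (fun r => exists b, B b /\ r = pt_set_dist Y b A)).

Definition interv_op {Y : Metric_Space}
  (Z : R -> R -> Base Y -> Prop) (Gamma K : R -> R -> Base Y -> R)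
  (V : R -> R -> R) (t x : R) : R :=
  Rsup (fun r => exists z, Z t x z /\ r = V t (Gamma t x z) + K t x z).

(* linear interpolation of U = (U_0..U_M) on an increasing grid xg_0 < ... < xg_M *)
Fixpoint interp_search (xg U : nat -> R) (y : R) (k fuel : nat) : R :=
  match fuel with
  | O => U k
  | S f =>
      if Rlt_dec y (xg (S k))
      then let alpha := (y - xg k) / (xg (S k) - xg k) in
           alpha * U (S k) + (1 - alpha) * U k
      else interp_search xg U y (S k) f
  end.

Definition interp (M : nat) (xg U : nat -> R) (y : R) : R :=
  if Rle_dec y (xg O) then U O
  else if Rle_dec (xg M) y then U M
  else interp_search xg U y O M.

Definition tau_grid (T : R) (N : nat) (n : nat) : R := T - INR n * (T / INR N).
Definition x_grid (M : nat) (dx : R) (i : nat) : R := (INR i - INR M / 2) * dx.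

Definition disc_interv_op {Y : Metric_Space}
  (Zh : R -> R -> Base Y -> Prop) (Gamma K : R -> R -> Base Y -> R)
  (M : nat) (xg : nat -> R) (tn : R) (U : nat -> R) (i : nat) : R :=
  Rsup (fun r => exists z, Zh tn (xg i) z /\
          r = interp M xg U (Gamma tn (xg i) z) + K tn (xg i) z).

Definition hr_set (T : R) (u : R -> R -> R -> R) (t x : R) : R -> R -> Prop :=
  fun delta r => exists h s y, 0 < h < delta /\ 0 <= s <= T /\
     Rabs (s - t) < delta /\ Rabs (y - x) < delta /\ r = u h s y.

Definition u_upper (T : R) (u : R -> R -> R -> R) (t x : R) : R :=
  limsup_at (hr_set T u t x).
Definition u_lower (T : R) (u : R -> R -> R -> R) (t x : R) : R :=
  liminf_at (hr_set T u t x).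

Definition grid_set {Y : Metric_Space} (T : R)
  (Zh : R -> R -> R -> Base Y -> Prop) (Gamma K : R -> R -> Base Y -> R)
  (N M : R -> nat) (dx : R -> R) (u : R -> R -> R -> R) (t x : R)
  : R -> R -> Prop :=
  fun delta r => exists h n i,
     0 < h < delta /\ (n <= N h)%nat /\ (i <= M h)%nat /\
     Rabs (tau_grid T (N h) n - t) < delta /\
     Rabs (x_grid (M h) (dx h) i - x) < delta /\
     r = disc_interv_op (Zh h) Gamma K (M h) (x_grid (M h) (dx h))
           (tau_grid T (N h) n)
           (fun j => u h (tau_grid T (N h) n) (x_grid (M h) (dx h) j)) i.

(* Main.v *)
Require Import Defs.
From Stdlib Require Import Reals Lra Lia List Classical ClassicalEpsilon.
Open Scope R_scope.

Lemma Rabs_le_inv' x a : Rabs x <= a -> - a <= x <= a.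
Proof. unfold Rabs; destruct (Rcase_abs x); intros; lra. Qed.
Lemma Rabs_lt_inv' x a : Rabs x < a -> - a < x < a.
Proof. unfold Rabs; destruct (Rcase_abs x); intros; lra. Qed.
Lemma Rabs_le' x a : - a <= x <= a -> Rabs x <= a.
Proof. unfold Rabs; destruct (Rcase_abs x); intros; lra. Qed.
Lemma Rabs_lt' x a : - a < x < a -> Rabs x < a.
Proof. unfold Rabs; destruct (Rcase_abs x); intros; lra. Qed.

Lemma Rsup_lub (E : R -> Prop) : (exists r, E r) -> (exists b, forall r, E r -> r <= b) ->
  is_lub E (Rsup E).
Proof.
  intros Hne [b Hb]. unfold Rsup.
  destruct (excluded_middle_informative _) as [H|H].
  - destruct (completeness E (proj1 H) (proj2 H)) as [m Hm]; simpl; exact Hm.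
  - exfalso; apply H; split; [exists b; exact Hb| exact Hne].
Qed.

Lemma Rsup_ge (E : R -> Prop) r : E r -> (exists b, forall r, E r -> r <= b) -> r <= Rsup E.
Proof. intros Hr Hb. apply (proj1 (Rsup_lub E (ex_intro _ r Hr) Hb)); auto. Qed.

Lemma Rsup_le (E : R -> Prop) b : (exists r, E r) -> (forall r, E r -> r <= b) -> Rsup E <= b.
Proof. intros Hne Hb. apply (proj2 (Rsup_lub E Hne (ex_intro _ b Hb))); auto. Qed.

Lemma Rsup_approx (E : R -> Prop) eps : eps > 0 -> (exists r, E r) ->
  (exists b, forall r, E r -> r <= b) -> exists r, E r /\ r > Rsup E - eps.
Proof.
  intros He Hne Hb. apply NNPP; intro Hn.
  assert (Rsup E <= Rsup E - eps).
  { apply Rsup_le; auto. intros r Hr. apply Rnot_lt_le. intro; apply Hn; exists r; split; auto; lra. }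
  lra.
Qed.

Lemma lub_unique E a b : is_lub E a -> is_lub E b -> a = b.
Proof. intros [Ha Ha'] [Hb Hb']. apply Rle_antisym; auto. Qed.

Section LS.
Variable S : R -> R -> Prop.
Hypothesis Hne : forall d, d > 0 -> exists r, S d r.
Hypothesis Hmon : forall d d' r, 0 < d <= d' -> S d r -> S d' r.
Hypothesis Hbd : exists d1 B, d1 > 0 /\ forall r, S d1 r -> Rabs r <= B.

Let F := fun s => exists delta, delta > 0 /\ is_lub (S delta) s.

Lemma F_props : (exists r, (fun r => F (- r)) r) /\ (exists b, forall r, F (- r) -> r <= b).
Proof.
  destruct Hbd as [d1 [B [Hd1 HB]]]. split.
  - destruct (Hne d1 Hd1) as [r0 Hr0].
    assert (Hl := Rsup_lub (S d1) (ex_intro _ r0 Hr0)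
      (ex_intro _ B (fun r Hr => Rle_trans _ _ _ (Rle_abs r) (HB r Hr)))).
    exists (- Rsup (S d1)). unfold F. rewrite Ropp_involutive. exists d1; auto.
  - exists B. intros r [d [Hd [Hub _]]].
    destruct (Hne (Rmin d d1)) as [r0 Hr0]. { apply Rmin_pos; auto. }
    assert (H1 : S d r0). { apply (Hmon (Rmin d d1)); auto. split; [apply Rmin_pos; auto| apply Rmin_l]. }
    assert (H2 : S d1 r0). { apply (Hmon (Rmin d d1)); auto. split; [apply Rmin_pos; auto| apply Rmin_r]. }
    apply Hub in H1. apply HB in H2. apply Rabs_le_inv' in H2. lra.
Qed.

Lemma limsup_eq : limsup_at S = - Rsup (fun r => F (- r)).
Proof. reflexivity. Qed.

Lemma L1 : forall eps, eps > 0 -> exists d, d > 0 /\ forall r, S d r -> r <= limsup_at S + eps.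
Proof.
  intros eps He. destruct F_props as [Hn Hb].
  destruct (Rsup_approx _ eps He Hn Hb) as [r [[d [Hd Hl]] Hr]].
  exists d; split; auto. intros r' Hr'. rewrite limsup_eq.
  assert (r' <= - r) by (apply (proj1 Hl); auto). lra.
Qed.

Lemma L2 : forall L, (forall eps, eps > 0 -> exists d, d > 0 /\ forall r, S d r -> r <= L + eps) ->
  limsup_at S <= L.
Proof.
  intros L H. rewrite limsup_eq. destruct F_props as [Hn Hb].
  apply Rnot_lt_le; intro Hlt.
  set (eps := (- Rsup (fun r => F (- r)) - L) / 2).
  assert (He : eps > 0) by (unfold eps; lra).
  destruct (H eps He) as [d [Hd Hd']].
  destruct Hbd as [d1 [B [Hd1 HB]]].
  set (d2 := Rmin d d1).
  assert (Hd2 : 0 < d2) by (apply Rmin_pos; auto).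
  destruct (Hne d2 Hd2) as [r0 Hr0].
  assert (HBd : forall r, S d2 r -> r <= B).
  { intros r Hr. apply (Rle_trans _ _ _ (Rle_abs r)). apply HB. apply (Hmon d2); auto.
    split; auto; apply Rmin_r. }
  assert (Hl := Rsup_lub (S d2) (ex_intro _ r0 Hr0) (ex_intro _ B HBd)).
  assert (HF : F (- - Rsup (S d2))). { rewrite Ropp_involutive. exists d2; auto. }
  assert (Hle := Rsup_ge (fun r => F (- r)) (- Rsup (S d2)) HF Hb).
  assert (Rsup (S d2) <= L + eps).
  { apply (proj2 Hl). intros r Hr. apply Hd'. apply (Hmon d2); auto. split; auto; apply Rmin_l. }
  unfold eps in *. lra.
Qed.

Lemma limsup_ge : forall r, (forall d, d > 0 -> exists r', S d r' /\ r <= r') -> r <= limsup_at S.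
Proof.
  intros r H. apply Rnot_lt_le; intro Hlt.
  set (eps := (r - limsup_at S)/2).
  destruct (L1 eps) as [d [Hd Hd']]. unfold eps; lra.
  destruct (H d Hd) as [r' [Hr' Hrr]]. apply Hd' in Hr'. unfold eps in *; lra.
Qed.
End LS.

Section LI.
Variable S : R -> R -> Prop.
Hypothesis Hne : forall d, d > 0 -> exists r, S d r.
Hypothesis Hmon : forall d d' r, 0 < d <= d' -> S d r -> S d' r.
Hypothesis Hbd : exists d1 B, d1 > 0 /\ forall r, S d1 r -> Rabs r <= B.

Let S' := fun delta r => S delta (- r).
Lemma S'_ne : forall d, d > 0 -> exists r, S' d r.
Proof. intros d Hd. destruct (Hne d Hd) as [r Hr]. exists (-r). unfold S'. rewrite Ropp_involutive; auto. Qed.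
Lemma S'_mon : forall d d' r, 0 < d <= d' -> S' d r -> S' d' r.
Proof. unfold S'; eauto. Qed.
Lemma S'_bd : exists d1 B, d1 > 0 /\ forall r, S' d1 r -> Rabs r <= B.
Proof. destruct Hbd as [d1 [B [H1 H2]]]. exists d1, B; split; auto. intros r Hr.
  apply H2 in Hr. rewrite Rabs_Ropp in Hr; auto. Qed.

Lemma L1' : forall eps, eps > 0 -> exists d, d > 0 /\ forall r, S d r -> liminf_at S - eps <= r.
Proof.
  intros eps He. destruct (L1 S' S'_ne S'_mon S'_bd eps He) as [d [Hd H]].
  exists d; split; auto. intros r Hr. unfold liminf_at.
  assert (S' d (- r)) by (unfold S'; rewrite Ropp_involutive; auto).
  apply H in H0. fold S'. lra.
Qed.

Lemma L2' : forall L, (forall eps, eps > 0 -> exists d, d > 0 /\ forall r, S d r -> L - eps <= r) ->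
  L <= liminf_at S.
Proof.
  intros L H. unfold liminf_at. fold S'.
  assert (limsup_at S' <= - L).
  { apply (L2 S' S'_ne S'_mon S'_bd). intros eps He. destruct (H eps He) as [d [Hd H']].
    exists d; split; auto. intros r Hr. apply H' in Hr. lra. }
  lra.
Qed.

Lemma L3 : liminf_at S <= limsup_at S.
Proof.
  apply Rnot_lt_le; intro Hlt.
  set (eps := (liminf_at S - limsup_at S)/3).
  assert (He : eps > 0) by (unfold eps; lra).
  destruct (L1 S Hne Hmon Hbd eps He) as [d1 [Hd1 H1]].
  destruct (L1' eps He) as [d2 [Hd2 H2]].
  destruct (Hne (Rmin d1 d2)) as [r Hr]. apply Rmin_pos; auto.
  assert (r <= limsup_at S + eps) by (apply H1; apply (Hmon (Rmin d1 d2)); auto; split; [apply Rmin_pos; auto| apply Rmin_l]).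
  assert (liminf_at S - eps <= r) by (apply H2; apply (Hmon (Rmin d1 d2)); auto; split; [apply Rmin_pos; auto| apply Rmin_r]).
  unfold eps in *; lra.
Qed.
End LI.


Lemma list_bound {I : Type} (l : list I) (g : I -> R) : exists b, forall i, In i l -> g i <= b.
Proof.
  induction l as [|a l [b Hb]]. - exists 0; intros i [].
  - exists (Rmax (g a) b). intros i [->|Hi]. apply Rmax_l. apply Rle_trans with b; auto. apply Rmax_r.
Qed.

Lemma list_minpos {I : Type} (l : list I) (g : I -> R) :
  exists m, m > 0 /\ forall i, In i l -> g i > 0 -> m <= g i.
Proof.
  induction l as [|a l [m [Hm Hb]]]. - exists 1; split; [lra| intros i []].
  - destruct (Rlt_dec 0 (g a)).
    + exists (Rmin m (g a)); split. apply Rmin_pos; lra.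
      intros i [->|Hi] Hg. apply Rmin_r. apply Rle_trans with m; auto. apply Rmin_l.
    + exists m; split; auto. intros i [->|Hi] Hg. lra. auto.
Qed.

Section Met.
Variable Y : Metric_Space.

Lemma ball_open (z : Base Y) r (P : Prop) : mopen Y (fun w => dist Y w z < r /\ P).
Proof.
  intros w [Hw HP]. exists (r - dist Y w z); split; [lra|].
  intros w' Hw'. split; auto. pose proof (dist_tri Y w' z w). rewrite (dist_sym Y w' w) in H. lra.
Qed.

Lemma compact_unif (A : Base Y -> Prop) (Q : R -> Base Y -> Prop) :
  mcompact Y A -> (forall r r' w, 0 < r' <= r -> Q r w -> Q r' w) ->
  (forall z, A z -> exists r, r > 0 /\ forall w, dist Y w z < r -> Q r w) ->
  exists rho, rho > 0 /\ forall w z, A z -> dist Y w z < rho -> Q rho w.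
Proof.
  intros Hc Hanti Hloc.
  destruct (Hc (Base Y * R)%type
    (fun i w => dist Y w (fst i) < snd i / 2 /\ (snd i > 0 /\ forall w', dist Y w' (fst i) < snd i -> Q (snd i) w')))
    as [l Hl].
  - intros [z r]. apply ball_open.
  - intros y Hy. destruct (Hloc y Hy) as [r [Hr Hq]]. exists (y, r); simpl.
    split; [|split; auto]. assert (dist Y y y = 0) by (apply dist_refl; auto). lra.
  - destruct (list_minpos l (fun i => snd i / 2)) as [m [Hm Hmb]].
    exists m; split; auto. intros w z Hz Hwz.
    destruct (Hl z Hz) as [[zi ri] [Hin [Hd [Hri Hq]]]]; simpl in *.
    assert (m <= ri / 2) by (apply (Hmb (zi, ri)); simpl; auto; lra).
    apply (Hanti ri); [lra|]. apply Hq.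
    pose proof (dist_tri Y w zi z). lra.
Qed.

Lemma compact_bound (A : Base Y -> Prop) (f : Base Y -> R) :
  mcompact Y A ->
  (forall z, A z -> exists r b, r > 0 /\ forall w, dist Y w z < r -> f w <= b) ->
  exists B, forall w, A w -> f w <= B.
Proof.
  intros Hc Hloc.
  destruct (Hc (Base Y * R * R)%type
    (fun i => fun w => dist Y w (fst (fst i)) < snd (fst i) /\
       (forall w', dist Y w' (fst (fst i)) < snd (fst i) -> f w' <= snd i))) as [l Hl].
  - intros [[z r] b]. apply ball_open.
  - intros y Hy. destruct (Hloc y Hy) as [r [b [Hr Hb]]]. exists (y, r, b); simpl.
    split; auto. assert (dist Y y y = 0) by (apply dist_refl; auto). lra.
  - destruct (list_bound l snd) as [B HB]. exists B. intros w Hw.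
    destruct (Hl w Hw) as [[[zi ri] bi] [Hin [Hd Hf]]]; simpl in *.
    apply Rle_trans with bi; auto. apply (HB _ Hin).
Qed.

Definition mbounded (A : Base Y -> Prop) := exists a0 R0, forall a, A a -> dist Y a a0 <= R0.

Lemma compact_bounded A : mcompact Y A -> (exists a, A a) -> mbounded A.
Proof.
  intros Hc [a0 Ha0]. destruct (compact_bound A (fun w => dist Y w a0) Hc) as [B HB].
  - intros z Hz. exists 1, (dist Y z a0 + 1); split; [lra|]. intros w Hw.
    pose proof (dist_tri Y w a0 z). lra.
  - exists a0, B; auto.
Qed.

Lemma pt_le a (B : Base Y -> Prop) b : B b -> pt_set_dist Y a B <= dist Y a b.
Proof.
  intros Hb. unfold pt_set_dist, Rinf.
  assert (- dist Y a b <= Rsup (fun r => exists b, B b /\ - r = dist Y a b)).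
  { apply Rsup_ge. exists b; split; auto; lra. exists 0. intros r [b' [_ Hr]].
    pose proof (dist_pos Y a b'). lra. }
  lra.
Qed.

Lemma pt_lt a (B : Base Y -> Prop) eta : (exists b, B b) -> pt_set_dist Y a B < eta ->
  exists b, B b /\ dist Y a b < eta.
Proof.
  intros [b0 Hb0] Hlt. unfold pt_set_dist, Rinf in Hlt.
  destruct (Rsup_approx (fun r => exists b, B b /\ - r = dist Y a b) (eta + Rsup (fun r => exists b, B b /\ - r = dist Y a b)))
   as [r [[b [Hb Hr]] Hr']].
  - lra.
  - exists (- dist Y a b0); exists b0; split; auto; lra.
  - exists 0. intros r [b' [_ Hr]]. pose proof (dist_pos Y a b'). lra.
  - exists b; split; auto. lra.
Qed.

Lemma haus1 (A B : Base Y -> Prop) a eta : hausdorff_dist Y A B < eta -> A a -> mbounded A ->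
  (exists b, B b) -> exists b, B b /\ dist Y a b < eta.
Proof.
  intros Hh Ha [a0 [R0 HR]] [b0 Hb0]. apply pt_lt; [exists b0; auto|].
  unfold hausdorff_dist in Hh.
  pose proof (Rmax_l (Rsup (fun r => exists a, A a /\ r = pt_set_dist Y a B))
       (Rsup (fun r => exists b, B b /\ r = pt_set_dist Y b A))).
  assert (pt_set_dist Y a B <= Rsup (fun r => exists a, A a /\ r = pt_set_dist Y a B)).
  { apply Rsup_ge. exists a; auto. exists (R0 + dist Y a0 b0).
    intros r [a' [Ha' ->]]. apply Rle_trans with (dist Y a' b0). apply pt_le; auto.
    pose proof (dist_tri Y a' b0 a0). pose proof (HR a' Ha'). lra. }
  lra.
Qed.

Lemma haus2 (A B : Base Y -> Prop) b eta : hausdorff_dist Y A B < eta -> B b -> mbounded B ->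
  (exists a, A a) -> exists a, A a /\ dist Y b a < eta.
Proof.
  intros Hh Hb [b0 [R0 HR]] [a0 Ha0]. apply pt_lt; [exists a0; auto|].
  unfold hausdorff_dist in Hh.
  pose proof (Rmax_r (Rsup (fun r => exists a, A a /\ r = pt_set_dist Y a B))
       (Rsup (fun r => exists b, B b /\ r = pt_set_dist Y b A))).
  assert (pt_set_dist Y b A <= Rsup (fun r => exists b, B b /\ r = pt_set_dist Y b A)).
  { apply Rsup_ge. exists b; auto. exists (R0 + dist Y b0 a0).
    intros r [b' [Hb' ->]]. apply Rle_trans with (dist Y b' a0). apply pt_le; auto.
    pose proof (dist_tri Y b' a0 b0). pose proof (HR b' Hb'). lra. }
  lra.
Qed.

Lemma mbounded_sub (A B : Base Y -> Prop) : (forall a, A a -> B a) -> mbounded B -> mbounded A.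
Proof. intros H [a0 [R0 HR]]. exists a0, R0; auto. Qed.
End Met.


Lemma search_spec (xg U : nat -> R) y M : forall fuel k, (k + fuel = M)%nat -> xg k <= y -> y < xg M ->
  exists k', (k' < M)%nat /\ xg k' <= y < xg (S k') /\
   interp_search xg U y k fuel = ((y - xg k') / (xg (S k') - xg k')) * U (S k') +
      (1 - (y - xg k') / (xg (S k') - xg k')) * U k'.
Proof.
  induction fuel as [|f IH]; intros k Hk H1 H2.
  - replace k with M in H1 by lia. lra.
  - simpl. destruct (Rlt_dec y (xg (S k))).
    + exists k. split; [lia|]. split; [lra| reflexivity].
    + apply IH; auto. lia. lra.
Qed.

Lemma xg_S M dx k : x_grid M dx (S k) = x_grid M dx k + dx.
Proof. unfold x_grid. rewrite S_INR. ring. Qed.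

Lemma interp_conv M dx U y : dx > 0 -> x_grid M dx 0 < y < x_grid M dx M ->
  exists k a, (k < M)%nat /\ 0 <= a <= 1 /\ Rabs (x_grid M dx k - y) <= dx /\
    Rabs (x_grid M dx (S k) - y) <= dx /\
    interp M (x_grid M dx) U y = a * U (S k) + (1 - a) * U k.
Proof.
  intros Hdx [H1 H2]. unfold interp.
  destruct (Rle_dec y (x_grid M dx 0)); [lra|].
  destruct (Rle_dec (x_grid M dx M) y); [lra|].
  destruct (search_spec (x_grid M dx) U y M M 0) as [k [Hk [[Hy1 Hy2] He]]]; auto; try lra.
  rewrite xg_S in *. exists k, ((y - x_grid M dx k) / (x_grid M dx k + dx - x_grid M dx k)).
  replace (x_grid M dx k + dx - x_grid M dx k) with dx in * by ring.
  assert (Ha0 : 0 <= (y - x_grid M dx k) / dx).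
  { apply Rmult_le_pos; [lra| left; apply Rinv_0_lt_compat; lra]. }
  assert (Ha1 : (y - x_grid M dx k) / dx <= 1).
  { apply (Rmult_le_reg_r dx); auto. unfold Rdiv. rewrite Rmult_assoc, Rinv_l by (apply Rgt_not_eq; lra). lra. }
  split; auto. split; [split; auto|].
  split; [apply Rabs_le'; lra|]. rewrite xg_S. split; [apply Rabs_le'; lra|]. exact He.
Qed.

Lemma interp_abs M dx U b : dx > 0 -> (forall j, (j <= M)%nat -> Rabs (U j) <= b) ->
  forall y, Rabs (interp M (x_grid M dx) U y) <= b.
Proof.
  intros Hdx HU y.
  destruct (Rle_dec y (x_grid M dx 0)) as [Hy|Hy].
  { unfold interp. destruct (Rle_dec y (x_grid M dx 0)); [|contradiction]. apply HU; lia. }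
  destruct (Rle_dec (x_grid M dx M) y) as [Hy'|Hy'].
  { unfold interp. destruct (Rle_dec y (x_grid M dx 0)); [contradiction|].
    destruct (Rle_dec (x_grid M dx M) y); [|contradiction]. apply HU; lia. }
  destruct (interp_conv M dx U y Hdx) as [k [a [Hk [Ha [_ [_ ->]]]]]]. lra.
  pose proof (Rabs_le_inv' _ _ (HU k ltac:(lia))).
  pose proof (Rabs_le_inv' _ _ (HU (S k) ltac:(lia))).
  apply Rabs_le'. nra.
Qed.

Lemma interp_le M dx U y b : dx > 0 -> x_grid M dx 0 < y < x_grid M dx M ->
  (forall j, (j <= M)%nat -> Rabs (x_grid M dx j - y) <= dx -> U j <= b) ->
  interp M (x_grid M dx) U y <= b.
Proof.
  intros Hdx Hy HU.
  destruct (interp_conv M dx U y Hdx Hy) as [k [a [Hk [Ha [H1 [H2 ->]]]]]].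
  pose proof (HU k ltac:(lia) H1). pose proof (HU (S k) ltac:(lia) H2). nra.
Qed.

Lemma interp_ge M dx U y b : dx > 0 -> x_grid M dx 0 < y < x_grid M dx M ->
  (forall j, (j <= M)%nat -> Rabs (x_grid M dx j - y) <= dx -> b <= U j) ->
  b <= interp M (x_grid M dx) U y.
Proof.
  intros Hdx Hy HU.
  destruct (interp_conv M dx U y Hdx Hy) as [k [a [Hk [Ha [H1 [H2 ->]]]]]].
  pose proof (HU k ltac:(lia) H1). pose proof (HU (S k) ltac:(lia) H2). nra.
Qed.


Lemma nat_floor d a : d > 0 -> a >= 0 -> exists n, INR n * d <= a < INR n * d + d.
Proof.
  intros Hd Ha. destruct (INR_archimed d a Hd) as [m Hm].
  revert Hm. induction m as [|m IH]; intros Hm.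
  - simpl in Hm. lra.
  - destruct (Rlt_dec a (INR m * d)) as [H|H].
    + apply IH; lra.
    + exists m. rewrite S_INR in Hm. lra.
Qed.

Lemma tau_in T N n : T > 0 -> (N >= 1)%nat -> (n <= N)%nat -> 0 <= tau_grid T N n <= T.
Proof.
  intros HT HN Hn. unfold tau_grid.
  assert (HN' : INR N >= 1) by (apply Rle_ge; apply (le_INR 1); lia).
  assert (Hn' : INR n <= INR N) by (apply le_INR; lia).
  assert (Hn0 : 0 <= INR n) by apply pos_INR.
  assert (Hd : 0 < T / INR N) by (apply Rdiv_lt_0_compat; lra).
  assert (INR N * (T / INR N) = T) by (field; lra).
  split; [|nra]. nra.
Qed.

Lemma C_pos T C N : T > 0 -> (N >= 1)%nat -> T / INR N <= C * 1 -> C > 0.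
Proof.
  intros HT HN H. assert (INR N >= 1) by (apply Rle_ge; apply (le_INR 1); lia).
  assert (0 < T / INR N) by (apply Rdiv_lt_0_compat; lra). lra.
Qed.

Lemma grid_exists T C (N M : R -> nat) (dx : R -> R) t x delta :
  T > 0 -> C > 0 ->
  (forall h, h > 0 -> (N h >= 1)%nat) ->
  (forall h, h > 0 -> dx h > 0) ->
  (forall h, h > 0 -> T / INR (N h) <= C * h) ->
  (forall h, h > 0 -> dx h <= C * h) ->
  (forall B, exists h0, h0 > 0 /\ forall h, 0 < h < h0 -> INR (M h) * dx h > B) ->
  0 <= t <= T -> delta > 0 ->
  exists h n i, 0 < h < delta /\ (n <= N h)%nat /\ (i <= M h)%nat /\
     Rabs (tau_grid T (N h) n - t) < delta /\ Rabs (x_grid (M h) (dx h) i - x) < delta.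
Proof.
  intros HT HC HN Hdx HCtau HCdx HMinf Ht Hd.
  destruct (HMinf (2 * Rabs x + 2)) as [h0 [Hh0 HM]].
  set (h := Rmin delta (Rmin (delta / C) h0) / 2).
  assert (Hm1 : Rmin delta (Rmin (delta / C) h0) <= delta) by apply Rmin_l.
  assert (Hm2 : Rmin delta (Rmin (delta / C) h0) <= delta / C) by
    (eapply Rle_trans; [apply Rmin_r| apply Rmin_l]).
  assert (Hm3 : Rmin delta (Rmin (delta / C) h0) <= h0) by
    (eapply Rle_trans; [apply Rmin_r| apply Rmin_r]).
  assert (Hm0 : 0 < Rmin delta (Rmin (delta / C) h0)).
  { apply Rmin_pos; auto. apply Rmin_pos; auto. apply Rdiv_lt_0_compat; lra. }
  assert (Hh : 0 < h) by (unfold h; lra).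
  assert (HCh : C * h < delta).
  { unfold h. assert (C * (delta / C) = delta) by (field; lra). nra. }
  pose proof (HN h Hh) as HNh. pose proof (HCtau h Hh). pose proof (HCdx h Hh). pose proof (Hdx h Hh).
  pose proof (HM h ltac:(unfold h; lra)) as HMh.
  assert (HNr : INR (N h) >= 1) by (apply Rle_ge; apply (le_INR 1); lia).
  set (d := T / INR (N h)).
  assert (Hdpos : 0 < d) by (apply Rdiv_lt_0_compat; lra).
  assert (HNd : INR (N h) * d = T) by (unfold d; field; lra).
  destruct (nat_floor d (T - t)) as [n [Hn1 Hn2]]; auto. lra.
  pose proof (Rabs_pos x). pose proof (Rle_abs x). pose proof (Rle_abs (-x)). rewrite Rabs_Ropp in *.
  destruct (nat_floor (dx h) (x + INR (M h) * dx h / 2)) as [i [Hi1 Hi2]]; auto. lra.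
  exists h, n, i. split; [unfold h; lra|].
  split. { apply INR_le. apply (Rmult_le_reg_r d); auto. lra. }
  split. { apply INR_le. apply (Rmult_le_reg_r (dx h)); auto. lra. }
  assert (Hdd : d <= C * h) by (unfold d; lra).
  assert (Hxe : (INR i - INR (M h) / 2) * dx h = INR i * dx h - INR (M h) * dx h / 2) by field.
  unfold tau_grid, x_grid. fold d. rewrite Hxe.
  split; apply Rabs_lt'; split; lra.
Qed.


Lemma two_min a b : a > 0 -> b > 0 -> exists c, c > 0 /\ c <= a /\ c <= b.
Proof. intros. exists (Rmin a b). split; [apply Rmin_pos; auto| split; [apply Rmin_l| apply Rmin_r]]. Qed.

Lemma Zcont (T : R) (Y : Metric_Space) (Z : R -> R -> Base Y -> Prop) (Zh : R -> R -> R -> Base Y -> Prop)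
  (HZne : forall t x, 0 <= t <= T -> exists z, Z t x z)
  (HZcpt : forall t x, 0 <= t <= T -> mcompact Y (Z t x))
  (HZhne : forall h t x, h > 0 -> 0 <= t <= T -> exists z, Zh h t x z)
  (HZhsub : forall h t x z, h > 0 -> 0 <= t <= T -> Zh h t x z -> Z t x z)
  (HZhconv : forall Rb eps, eps > 0 -> exists h0, h0 > 0 /\
     forall h, 0 < h < h0 -> forall t x, 0 <= t <= T -> Rabs x <= Rb ->
       hausdorff_dist Y (Zh h t x) (Z t x) < eps)
  (HZhcont : forall h, h > 0 -> forall t x, 0 <= t <= T ->
     forall eps, eps > 0 -> exists del, del > 0 /\
     forall s y, 0 <= s <= T -> Rabs (s - t) < del -> Rabs (y - x) < del ->
       hausdorff_dist Y (Zh h s y) (Zh h t x) < eps) :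
  forall t x, 0 <= t <= T -> forall eta, eta > 0 -> exists del, del > 0 /\
    forall s y, 0 <= s <= T -> Rabs (s - t) < del -> Rabs (y - x) < del ->
    (forall w, Z s y w -> exists w', Z t x w' /\ dist Y w w' < eta) /\
    (forall w, Z t x w -> exists w', Z s y w' /\ dist Y w w' < eta).
Proof.
  intros t x Ht eta He.
  destruct (HZhconv (Rabs x + 1) (eta / 3)) as [h0 [Hh0 Hconv]]; [lra|].
  set (h1 := h0 / 2). assert (Hh1 : 0 < h1 < h0) by (unfold h1; lra).
  destruct (HZhcont h1 ltac:(lra) t x Ht (eta / 3)) as [del [Hdel Hcont]]; [lra|].
  destruct (two_min del 1) as [d [Hd [Hd1 Hd2]]]; auto; try lra.
  exists d; split; auto. intros s y Hs Hst Hyx.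
  assert (Hyb : Rabs y <= Rabs x + 1).
  { pose proof (Rabs_triang (y - x) x) as Htr. replace (y - x + x) with y in Htr by ring. lra. }
  assert (Hxb : Rabs x <= Rabs x + 1) by lra.
  pose proof (Hconv h1 Hh1 s y Hs Hyb) as C1.
  pose proof (Hconv h1 Hh1 t x Ht Hxb) as C3.
  pose proof (Hcont s y Hs ltac:(lra) ltac:(lra)) as C2.
  assert (Bsy : mbounded Y (Z s y)) by (apply compact_bounded; auto).
  assert (Btx : mbounded Y (Z t x)) by (apply compact_bounded; auto).
  assert (Bhsy : mbounded Y (Zh h1 s y)) by (apply (mbounded_sub Y _ (Z s y)); [intros a Ha; eapply HZhsub; [|exact Hs|exact Ha]; lra | exact Bsy]).
  assert (Bhtx : mbounded Y (Zh h1 t x)) by (apply (mbounded_sub Y _ (Z t x)); [intros a Ha; eapply HZhsub; [|exact Ht|exact Ha]; lra | exact Btx]).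
  assert (Nsy : exists a, Zh h1 s y a) by (apply HZhne; auto; lra).
  assert (Ntx : exists a, Zh h1 t x a) by (apply HZhne; auto; lra).
  split; intros w Hw.
  - destruct (haus2 Y _ _ w _ C1 Hw Bsy Nsy) as [w1 [Hw1 D1]].
    destruct (haus1 Y _ _ w1 _ C2 Hw1 Bhsy Ntx) as [w2 [Hw2 D2]].
    destruct (haus1 Y _ _ w2 _ C3 Hw2 Bhtx (HZne t x Ht)) as [w3 [Hw3 D3]].
    exists w3; split; auto.
    pose proof (dist_tri Y w w3 w1). pose proof (dist_tri Y w1 w3 w2). lra.
  - destruct (haus2 Y _ _ w _ C3 Hw Btx Ntx) as [w1 [Hw1 D1]].
    destruct (haus2 Y _ _ w1 _ C2 Hw1 Bhtx Nsy) as [w2 [Hw2 D2]].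
    destruct (haus1 Y _ _ w2 _ C1 Hw2 Bhsy (HZne s y Hs)) as [w3 [Hw3 D3]].
    exists w3; split; auto.
    pose proof (dist_tri Y w w3 w1). pose proof (dist_tri Y w1 w3 w2). lra.
Qed.

Lemma interv_bd (Y : Metric_Space) (Z : R -> R -> Base Y -> Prop) (Gamma K : R -> R -> Base Y -> R)
  (V : R -> R -> R) t x B :
  mcompact Y (Z t x) -> (exists z, Z t x z) -> (forall y, Rabs (V t y) <= B) ->
  (forall z, Z t x z -> exists del, del > 0 /\ forall w, dist Y w z < del -> Rabs (K t x w - K t x z) < 1) ->
  (exists r, (fun r => exists z, Z t x z /\ r = V t (Gamma t x z) + K t x z) r) /\
  (exists b, forall r, (fun r => exists z, Z t x z /\ r = V t (Gamma t x z) + K t x z) r -> r <= b).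
Proof.
  intros Hc [z0 Hz0] HV HK. split.
  - exists (V t (Gamma t x z0) + K t x z0); exists z0; auto.
  - destruct (compact_bound Y (Z t x) (K t x) Hc) as [b Hb].
    + intros z Hz. destruct (HK z Hz) as [del [Hdel H]]. exists del, (K t x z + 1); split; auto.
      intros w Hw. apply H in Hw. apply Rabs_lt_inv' in Hw. lra.
    + exists (B + b). intros r [z [Hz ->]]. pose proof (Rabs_le_inv' _ _ (HV (Gamma t x z))).
      pose proof (Hb z Hz). lra.
Qed.


Theorem lemma4p9
  (T : R) (HT : T > 0)
  (Y : Metric_Space)
  (Z : R -> R -> Base Y -> Prop)
  (Gamma K : R -> R -> Base Y -> R)
  (C : R)
  (N M : R -> nat) (dx : R -> R)
  (Zh : R -> R -> R -> Base Y -> Prop)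
  (u : R -> R -> R -> R)
  (* Z(t,x) nonempty compact *)
  (HZne : forall t x, 0 <= t <= T -> exists z, Z t x z)
  (HZcpt : forall t x, 0 <= t <= T -> mcompact Y (Z t x))
  (* Gamma, K continuous on [0,T] x R x Y *)
  (HGc : forall t x z, 0 <= t <= T -> forall eps, eps > 0 -> exists del, del > 0 /\
     forall s y w, 0 <= s <= T -> Rabs (s - t) < del -> Rabs (y - x) < del ->
       dist Y w z < del -> Rabs (Gamma s y w - Gamma t x z) < eps)
  (HKc : forall t x z, 0 <= t <= T -> forall eps, eps > 0 -> exists del, del > 0 /\
     forall s y w, 0 <= s <= T -> Rabs (s - t) < del -> Rabs (y - x) < del ->
       dist Y w z < del -> Rabs (K s y w - K t x z) < eps)
  (* grids: N >= 1, dx > 0, dtau, dx <= C h, M even, M dx -> infinity *)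
  (HN : forall h, h > 0 -> (N h >= 1)%nat)
  (Hdx : forall h, h > 0 -> dx h > 0)
  (HCtau : forall h, h > 0 -> T / INR (N h) <= C * h)
  (HCdx : forall h, h > 0 -> dx h <= C * h)
  (HMeven : forall h, h > 0 -> Nat.Even (M h))
  (HMinf : forall B, exists h0, h0 > 0 /\
     forall h, 0 < h < h0 -> INR (M h) * dx h > B)
  (* Z^h(t,x) finite nonempty subsets of Z(t,x) *)
  (HZhfin : forall h t x, h > 0 -> 0 <= t <= T -> finite_set (Zh h t x))
  (HZhne : forall h t x, h > 0 -> 0 <= t <= T -> exists z, Zh h t x z)
  (HZhsub : forall h t x z, h > 0 -> 0 <= t <= T -> Zh h t x z -> Z t x z)
  (* Z^h -> Z locally uniformly in the Hausdorff metric *)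
  (HZhconv : forall Rb eps, eps > 0 -> exists h0, h0 > 0 /\
     forall h, 0 < h < h0 -> forall t x, 0 <= t <= T -> Rabs x <= Rb ->
       hausdorff_dist Y (Zh h t x) (Z t x) < eps)
  (* (t,x) |-> Z^h(t,x) Hausdorff continuous *)
  (HZhcont : forall h, h > 0 -> forall t x, 0 <= t <= T ->
     forall eps, eps > 0 -> exists del, del > 0 /\
     forall s y, 0 <= s <= T -> Rabs (s - t) < del -> Rabs (y - x) < del ->
       hausdorff_dist Y (Zh h s y) (Zh h t x) < eps)
  (* (u^h) uniformly bounded *)
  (Hub : exists B, forall h t x, h > 0 -> 0 <= t <= T -> Rabs (u h t x) <= B) :
  forall t x, 0 <= t <= T ->
    interv_op Z Gamma K (u_lower T u) t x
      <= liminf_at (grid_set T Zh Gamma K N M dx u t x)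
    /\ liminf_at (grid_set T Zh Gamma K N M dx u t x)
      <= limsup_at (grid_set T Zh Gamma K N M dx u t x)
    /\ limsup_at (grid_set T Zh Gamma K N M dx u t x)
      <= interv_op Z Gamma K (u_upper T u) t x.
Proof.
  intros t x Ht.
  destruct Hub as [Bu HBu].
  assert (HC : C > 0) by (apply (C_pos T C (N 1)); auto; [apply HN; lra| apply HCtau; lra]).
  assert (HZc := Zcont T Y Z Zh HZne HZcpt HZhne HZhsub HZhconv HZhcont).
  assert (HR : forall t0 y0, 0 <= t0 <= T ->
     (forall d, d > 0 -> exists r, hr_set T u t0 y0 d r) /\
     (forall d d' r, 0 < d <= d' -> hr_set T u t0 y0 d r -> hr_set T u t0 y0 d' r) /\
     (exists d1 B, d1 > 0 /\ forall r, hr_set T u t0 y0 d1 r -> Rabs r <= B)).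
  { intros t0 y0 Ht0. split; [|split].
    - intros d Hd. exists (u (d/2) t0 y0). exists (d/2), t0, y0.
      rewrite !Rminus_diag, !Rabs_R0. repeat split; auto; lra.
    - intros d d' r Hdd [h [s [y [Hh [Hs [H1 [H2 ->]]]]]]]. exists h, s, y. repeat split; auto; lra.
    - exists 1, Bu; split; [lra|]. intros r [h [s [y [Hh [Hs [H1 [H2 ->]]]]]]]. apply HBu; auto; lra. }
  assert (HUb : forall t0 y0, 0 <= t0 <= T -> Rabs (u_upper T u t0 y0) <= Bu).
  { intros t0 y0 Ht0. destruct (HR t0 y0 Ht0) as [A1 [A2 A3]]. apply Rabs_le'; split.
    - apply Rnot_lt_le; intro Hlt. destruct (L1 _ A1 A2 A3 ((-Bu - u_upper T u t0 y0)/2)) as [d [Hd Hd']]; [lra|].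
      destruct (A1 d Hd) as [r Hr]. pose proof (Hd' r Hr).
      destruct Hr as [h [s [y [Hh [Hs [H1 [H2 ->]]]]]]]. pose proof (Rabs_le_inv' _ _ (HBu h s y ltac:(lra) Hs)).
      unfold u_upper in *. lra.
    - apply (L2 _ A1 A2 A3). intros eps He. exists 1; split; [lra|].
      intros r [h [s [y [Hh [Hs [H1 [H2 ->]]]]]]]. pose proof (Rabs_le_inv' _ _ (HBu h s y ltac:(lra) Hs)). lra. }
  assert (HLb : forall t0 y0, 0 <= t0 <= T -> Rabs (u_lower T u t0 y0) <= Bu).
  { intros t0 y0 Ht0. destruct (HR t0 y0 Ht0) as [A1 [A2 A3]]. apply Rabs_le'; split.
    - apply (L2' _ A1 A2 A3). intros eps He. exists 1; split; [lra|].
      intros r [h [s [y [Hh [Hs [H1 [H2 ->]]]]]]]. pose proof (Rabs_le_inv' _ _ (HBu h s y ltac:(lra) Hs)). lra.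
    - apply Rnot_lt_le; intro Hlt. destruct (L1' _ A1 A2 A3 ((u_lower T u t0 y0 - Bu)/2)) as [d [Hd Hd']]; [lra|].
      destruct (A1 d Hd) as [r Hr]. pose proof (Hd' r Hr).
      destruct Hr as [h [s [y [Hh [Hs [H1 [H2 ->]]]]]]]. pose proof (Rabs_le_inv' _ _ (HBu h s y ltac:(lra) Hs)).
      unfold u_lower in *. lra. }
  assert (HKloc : forall z, Z t x z -> exists del, del > 0 /\ forall w, dist Y w z < del -> Rabs (K t x w - K t x z) < 1).
  { intros z Hz. destruct (HKc t x z Ht 1) as [del [Hdel H]]; [lra|]. exists del; split; auto.
    intros w Hw. apply H; auto; rewrite Rminus_diag, Rabs_R0; lra. }
  assert (EU := interv_bd Y Z Gamma K (u_upper T u) t x Bu (HZcpt t x Ht) (HZne t x Ht)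
     (fun y => HUb t y Ht) HKloc).
  assert (EL := interv_bd Y Z Gamma K (u_lower T u) t x Bu (HZcpt t x Ht) (HZne t x Ht)
     (fun y => HLb t y Ht) HKloc).
  set (G := grid_set T Zh Gamma K N M dx u t x).
  set (MU := interv_op Z Gamma K (u_upper T u) t x).
  set (ML := interv_op Z Gamma K (u_lower T u) t x).
  assert (NE : forall d, d > 0 -> exists r, G d r).
  { intros d Hd. destruct (grid_exists T C N M dx t x d HT HC HN Hdx HCtau HCdx HMinf Ht Hd)
      as [h [n [i [Hh [Hn [Hi [H1 H2]]]]]]].
    eexists. exists h, n, i. repeat split; eauto; lra. }
  assert (MON : forall d d' r, 0 < d <= d' -> G d r -> G d' r).
  { intros d d' r Hd [h [n [i [Hh [Hn [Hi [H1 [H2 ->]]]]]]]]. exists h, n, i. repeat split; auto; lra. }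
  assert (UP : forall eps, eps > 0 -> exists d, d > 0 /\ forall r, G d r -> r <= MU + eps).
  { intros eps He.
    destruct (compact_unif Y (Z t x) (fun r w => forall s y h, 0 <= s <= T -> Rabs (s - t) < r ->
        Rabs (y - x) < r -> 0 < h < r ->
        interp (M h) (x_grid (M h) (dx h)) (fun j => u h s (x_grid (M h) (dx h) j)) (Gamma s y w)
          + K s y w <= MU + eps) (HZcpt t x Ht)) as [rho [Hrho HQ]].
    - intros r r' w Hr Hq s y h Hs H1 H2 H3. apply Hq; auto; lra.
    - intros z Hz. set (g := Gamma t x z).
      destruct (HR t g Ht) as [A1 [A2 A3]].
      destruct (L1 _ A1 A2 A3 (eps/2)) as [d0 [Hd0 Hd0']]; [lra|].
      destruct (HGc t x z Ht (d0/2)) as [del1 [Hdel1 HG1]]; [lra|].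
      destruct (HKc t x z Ht (eps/2)) as [del2 [Hdel2 HK2]]; [lra|].
      destruct (HMinf (2 * (Rabs g + d0 + 1))) as [h0 [Hh0 HM0]].
      destruct (two_min del1 del2) as [r1 [Hr1 [Hr1a Hr1b]]]; auto.
      destruct (two_min r1 (d0/2)) as [r2 [Hr2 [Hr2a Hr2b]]]; auto; [lra|].
      destruct (two_min r2 (d0/(2*C))) as [r3 [Hr3 [Hr3a Hr3b]]]; auto; [apply Rdiv_lt_0_compat; lra|].
      destruct (two_min r3 h0) as [r [Hr [Hra Hrb]]]; auto.
      exists r; split; auto. intros w Hw s y h Hs H1 H2 H3.
      assert (Hgw : Rabs (Gamma s y w - g) < d0/2) by (apply HG1; auto; lra).
      assert (Hkw : Rabs (K s y w - K t x z) < eps/2) by (apply HK2; auto; lra).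
      pose proof (Hdx h ltac:(lra)) as Hdxh. pose proof (HCdx h ltac:(lra)) as HCdxh.
      assert (Hdxs : dx h < d0/2).
      { assert (C * (d0/(2*C)) = d0/2) by (field; lra). nra. }
      pose proof (HM0 h ltac:(lra)) as HMh.
      assert (Hx0 : x_grid (M h) (dx h) 0 = - (INR (M h) * dx h) / 2) by (unfold x_grid; simpl; field).
      assert (HxM : x_grid (M h) (dx h) (M h) = (INR (M h) * dx h) / 2) by (unfold x_grid; field).
      pose proof (Rle_abs g). pose proof (Rle_abs (-g)). rewrite Rabs_Ropp in *.
      pose proof (Rabs_lt_inv' _ _ Hgw). pose proof (Rabs_lt_inv' _ _ Hkw).
      assert (Hint : interp (M h) (x_grid (M h) (dx h)) (fun j => u h s (x_grid (M h) (dx h) j)) (Gamma s y w)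
                 <= u_upper T u t g + eps/2).
      { apply interp_le; auto.
        - rewrite Hx0, HxM. split; lra.
        - intros j Hj Hxj. apply Hd0'. exists h, s, (x_grid (M h) (dx h) j).
          pose proof (Rabs_le_inv' _ _ Hxj).
          repeat split; auto; try lra. apply Rabs_lt'; split; lra. }
      assert (u_upper T u t g + K t x z <= MU).
      { unfold MU, interv_op. apply Rsup_ge; [exists z; split; auto | exact (proj2 EU)]. }
      lra.
    - cbv beta in HQ. destruct (HZc t x Ht rho Hrho) as [dZ [HdZ HZ]].
      destruct (two_min rho dZ) as [d [Hd [Hda Hdb]]]; auto.
      exists d; split; auto. intros r [h [n [i [Hh [Hn [Hi [H1 [H2 ->]]]]]]]].
      assert (Htau := tau_in T (N h) n HT (HN h ltac:(lra)) Hn).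
      unfold disc_interv_op. apply Rsup_le.
      + destruct (HZhne h (tau_grid T (N h) n) (x_grid (M h) (dx h) i) ltac:(lra) Htau) as [z Hz].
        eexists; exists z; split; eauto.
      + intros v [w [Hw ->]].
        assert (Zw := HZhsub h _ _ _ ltac:(lra) Htau Hw).
        destruct (proj1 (HZ (tau_grid T (N h) n) (x_grid (M h) (dx h) i) Htau ltac:(lra) ltac:(lra)) w Zw) as [z [Hz Hwz]].
        apply (HQ w z Hz Hwz); auto; lra. }
  assert (LO : forall eps, eps > 0 -> exists d, d > 0 /\ forall r, G d r -> ML - eps <= r).
  { intros eps He.
    destruct (Rsup_approx _ (eps/4) ltac:(lra) (proj1 EL) (proj2 EL)) as [v [[z [Hz ->]] Hv]].
    set (g := Gamma t x z) in *.
    destruct (HR t g Ht) as [A1 [A2 A3]].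
    destruct (L1' _ A1 A2 A3 (eps/4)) as [d0 [Hd0 Hd0']]; [lra|].
    destruct (HGc t x z Ht (d0/2)) as [del1 [Hdel1 HG1]]; [lra|].
    destruct (HKc t x z Ht (eps/4)) as [del2 [Hdel2 HK2]]; [lra|].
    destruct (two_min del1 del2) as [eta [Heta [Hetaa Hetab]]]; auto.
    destruct (HZc t x Ht (eta/2)) as [dZ [HdZ HZ]]; [lra|].
    destruct (HZhconv (Rabs x + 1) (eta/2)) as [h0 [Hh0 Hconv]]; [lra|].
    destruct (HMinf (2 * (Rabs g + d0 + 1))) as [h1 [Hh1 HM1]].
    destruct (two_min (d0/2) (d0/(2*C))) as [r1 [Hr1 [Hr1a Hr1b]]]; [lra|apply Rdiv_lt_0_compat; lra|].
    destruct (two_min r1 eta) as [r2 [Hr2 [Hr2a Hr2b]]]; auto.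
    destruct (two_min r2 dZ) as [r3 [Hr3 [Hr3a Hr3b]]]; auto.
    destruct (two_min r3 h0) as [r4 [Hr4 [Hr4a Hr4b]]]; auto.
    destruct (two_min r4 h1) as [r5 [Hr5 [Hr5a Hr5b]]]; auto.
    destruct (two_min r5 1) as [d [Hd [Hda Hdb]]]; auto; [lra|].
    exists d; split; auto. intros r [h [n [i [Hh [Hn [Hi [H1 [H2 ->]]]]]]]].
    set (tau := tau_grid T (N h) n) in *. set (xi := x_grid (M h) (dx h) i) in *.
    assert (Htau := tau_in T (N h) n HT (HN h ltac:(lra)) Hn). fold tau in Htau.
    destruct (proj2 (HZ tau xi Htau ltac:(lra) ltac:(lra)) z Hz) as [z' [Hz' Dz']].
    assert (Hxb : Rabs xi <= Rabs x + 1).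
    { pose proof (Rabs_triang (xi - x) x) as Htr. replace (xi - x + x) with xi in Htr by ring. lra. }
    pose proof (Hconv h ltac:(lra) tau xi Htau Hxb) as HZh.
    destruct (haus2 Y _ _ z' _ HZh Hz' (compact_bounded Y _ (HZcpt tau xi Htau) (HZne tau xi Htau))
       (HZhne h tau xi ltac:(lra) Htau)) as [w [Hw Dw]].
    assert (Dwz : dist Y w z < eta).
    { pose proof (dist_tri Y w z z'). rewrite (dist_sym Y w z') in H. rewrite (dist_sym Y z' z) in H. lra. }
    assert (Hgw : Rabs (Gamma tau xi w - g) < d0/2) by (apply HG1; auto; lra).
    assert (Hkw : Rabs (K tau xi w - K t x z) < eps/4) by (apply HK2; auto; lra).
    pose proof (Hdx h ltac:(lra)) as Hdxh. pose proof (HCdx h ltac:(lra)) as HCdxh.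
    assert (Hdxs : dx h < d0/2).
    { assert (C * (d0/(2*C)) = d0/2) by (field; lra). nra. }
    pose proof (HM1 h ltac:(lra)) as HMh.
    assert (Hx0 : x_grid (M h) (dx h) 0 = - (INR (M h) * dx h) / 2) by (unfold x_grid; simpl; field).
    assert (HxM : x_grid (M h) (dx h) (M h) = (INR (M h) * dx h) / 2) by (unfold x_grid; field).
    pose proof (Rle_abs g). pose proof (Rle_abs (-g)). rewrite Rabs_Ropp in *.
    pose proof (Rabs_lt_inv' _ _ Hgw). pose proof (Rabs_lt_inv' _ _ Hkw).
    assert (Hint : u_lower T u t g - eps/4 <=
         interp (M h) (x_grid (M h) (dx h)) (fun j => u h tau (x_grid (M h) (dx h) j)) (Gamma tau xi w)).
    { apply interp_ge; auto.
      - rewrite Hx0, HxM. split; lra.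
      - intros j Hj Hxj. apply Hd0'. exists h, tau, (x_grid (M h) (dx h) j).
        pose proof (Rabs_le_inv' _ _ Hxj).
        repeat split; auto; try lra. apply Rabs_lt'; split; lra. }
    unfold disc_interv_op. fold xi.
    apply Rle_trans with (interp (M h) (x_grid (M h) (dx h)) (fun j => u h tau (x_grid (M h) (dx h) j)) (Gamma tau xi w) + K tau xi w).
    - unfold ML, interv_op, u_lower in *. lra.
    - apply Rsup_ge; [exists w; split; auto|].
      destruct (HZhfin h tau xi ltac:(lra) Htau) as [l Hl].
      destruct (list_bound l (K tau xi)) as [b Hb]. exists (Bu + b).
      intros r [w' [Hw' ->]].
      pose proof (interp_abs (M h) (dx h) (fun j => u h tau (x_grid (M h) (dx h) j)) Bu Hdxh
         (fun j _ => HBu h tau _ ltac:(lra) Htau) (Gamma tau xi w')).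
      pose proof (Hb w' (proj1 (Hl w') Hw')). pose proof (Rabs_le_inv' _ _ H5). lra. }
  assert (BD : exists d1 B, d1 > 0 /\ forall r, G d1 r -> Rabs r <= B).
  { destruct (UP 1) as [da [Hda Ha]]; [lra|]. destruct (LO 1) as [db [Hdb Hb]]; [lra|].
    destruct (two_min da db) as [d1 [Hd1 [Hd1a Hd1b]]]; auto.
    exists d1, (Rabs (MU + 1) + Rabs (ML - 1)); split; auto. intros r Hr.
    pose proof (Ha r (MON d1 da r ltac:(lra) Hr)). pose proof (Hb r (MON d1 db r ltac:(lra) Hr)).
    pose proof (Rle_abs (MU + 1)). pose proof (Rle_abs (-(ML - 1))). rewrite Rabs_Ropp in *.
    pose proof (Rabs_pos (MU + 1)). pose proof (Rabs_pos (ML - 1)).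
    apply Rabs_le'; lra. }
  split; [|split].
  - apply (L2' G NE MON BD). exact LO.
  - apply (L3 G NE MON BD).
  - apply (L2 G NE MON BD). exact UP.
Qed.
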